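(* In each of the four calculi ${\tt Name}$, ${\tt Value}^{\tt LR}$, ${\tt Value}^{\tt RL}$ and ${\tt Need}$ described below, reduction is deterministic: if $E_1,E_2$ are evaluation contexts of the calculus and $r_1,r_2$ are redexes of the calculus (terms matching the left-hand side of one of the two root rules $\mapsto_{\mathtt m}$, $\mapsto_{\mathtt e}$ defining it), then $E_1\langle r_1\rangle=E_2\langle r_2\rangle$ implies $E_1=E_2$ and $r_1=r_2$. Hence every term has at most one way to reduce.
   Context: Terms: $t,u,w ::= x \mid v \mid t\,u \mid t[x\leftarrow u]$, values $v ::= \lambda x.t$. Both $\lambda x.t$ and $t[x\leftarrow u]$ (an explicit substitution) bind $x$ in $t$; terms are taken up to $\alpha$-equivalence and rewriting is capture-avoiding. A context is a term with exactly one occurrence of a hole $\langle\cdot\rangle$; $C\langle t\rangle$ denotes plugging (which may capture variables). Substitution contexts: $L ::= \langle\cdot\rangle \mid L[x\leftarrow t]$. Root rules (for a family of contexts $C$, always assuming $C$ does not capture $x$, i.e. $x\in\mathrm{fv}(C\langle x\rangle)$): dB: $L\langle\lambda x.t\rangle u \mapsto L\langle t[x\leftarrow u]\rangle$; dBv: $L\langle\lambda x.t\rangle L'\langle v\rangle \mapsto L\langle t[x\leftarrow L'\langle v\rangle]\rangle$; ls (w.r.t. $C$): $C\langle x\rangle[x\leftarrow u]\mapsto C\langle u\rangle[x\leftarrow u]$; lsv (w.r.t. $C$): $C\langle x\rangle[x\leftarrow L\langle v\rangle]\mapsto L\langle C\langle v\rangle[x\leftarrow v]\rangle$. The four calculi,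 each given by evaluation contexts, a multiplicative root rule $\mapsto_{\mathtt m}$ and an exponential root rule $\mapsto_{\mathtt e}$: ${\tt Name}$: $H ::= \langle\cdot\rangle \mid H\,t \mid H[x\leftarrow t]$; $\mapsto_{\mathtt m}$ = dB; $\mapsto_{\mathtt e}$ = ls w.r.t. contexts $H$. ${\tt Value}^{\tt LR}$: $V ::= \langle\cdot\rangle \mid V\,t \mid L\langle v\rangle V \mid V[x\leftarrow t]$; $\mapsto_{\mathtt m}$ = dBv; $\mapsto_{\mathtt e}$ = lsv w.r.t. contexts $V$. ${\tt Value}^{\tt RL}$: $S ::= \langle\cdot\rangle \mid S\,L\langle v\rangle \mid t\,S \mid S[x\leftarrow t]$; $\mapsto_{\mathtt m}$ = dBv; $\mapsto_{\mathtt e}$ = lsv w.r.t. contexts $S$. ${\tt Need}$: $N ::= \langle\cdot\rangle \mid N\,t \mid N[x\leftarrow t] \mid N'\langle x\rangle[x\leftarrow N]$; $\mapsto_{\mathtt m}$ = dB; $\mapsto_{\mathtt e}$ = lsv w.r.t. contexts $N$. The reduction relations are $\multimap_{\mathtt m} := E\langle\mapsto_{\mathtt m}\rangle$ and $\multimap_{\mathtt e}:=E\langle\mapsto_{\mathtt e}\rangle$ for $E$ ranging over evaluation contexts of the calculus, and $\multimap:=\multimap_{\mathtt m}\cup\multimap_{\mathtt e}$. *)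

(* Defs.v *)
(* Terms are represented with de Bruijn indices, so that terms are
   identified up to alpha-equivalence and plugging of a context may capture. *)

(* t ::= x | \x.t | t u | t[x<-u]
   Lam t binds index 0 in t; ES t u  (= t[x<-u]) binds index 0 in t. *)
Inductive term : Type :=
  | Var : nat -> term
  | Lam : term -> term
  | App : term -> term -> term
  | ES  : term -> term -> term.

Definition is_value (t : term) : Prop := exists b, t = Lam b.

Inductive ctx : Type :=
  | Hole : ctx
  | CLam : ctx -> ctx
  | CAppL : ctx -> term -> ctx
  | CAppR : term -> ctx -> ctx
  | CESL : ctx -> term -> ctx
  | CESR : term -> ctx -> ctx.

Fixpoint plug (C : ctx) (t : term) : term :=
  match C with
  | Hole => t
  | CLam C => Lam (plug C t)
  | CAppL C u => App (plug C t) u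
  | CAppR u C => App u (plug C t)
  | CESL C u => ES (plug C t) u
  | CESR u C => ES u (plug C t)
  end.

Fixpoint depth (C : ctx) : nat :=
  match C with
  | Hole => 0
  | CLam C => S (depth C)
  | CAppL C _ => depth C
  | CAppR _ C => depth C
  | CESL C _ => S (depth C)
  | CESR _ C => depth C
  end.

(* C<x> where x is the variable bound just outside C, i.e. C does not
   capture x: in de Bruijn notation this is index (depth C). *)
Definition plug_bound_var (C : ctx) : term := plug C (Var (depth C)).

Inductive is_L : ctx -> Prop :=
  | L_hole : is_L Hole
  | L_es : forall L t, is_L L -> is_L (CESL L t).

Inductive is_H : ctx -> Prop :=
  | H_hole : is_H Hole
  | H_app : forall H t, is_H H -> is_H (CAppL H t)
  | H_es : forall H t, is_H H -> is_H (CESL H t).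

Inductive is_V : ctx -> Prop :=
  | V_hole : is_V Hole
  | V_appl : forall V t, is_V V -> is_V (CAppL V t)
  | V_appr : forall L v V, is_L L -> is_value v -> is_V V ->
      is_V (CAppR (plug L v) V)
  | V_es : forall V t, is_V V -> is_V (CESL V t).

Inductive is_S : ctx -> Prop :=
  | S_hole : is_S Hole
  | S_appl : forall S L v, is_S S -> is_L L -> is_value v ->
      is_S (CAppL S (plug L v))
  | S_appr : forall t S, is_S S -> is_S (CAppR t S)
  | S_es : forall S t, is_S S -> is_S (CESL S t).

Inductive is_N : ctx -> Prop :=
  | N_hole : is_N Hole
  | N_app : forall N t, is_N N -> is_N (CAppL N t)
  | N_es : forall N t, is_N N -> is_N (CESL N t)
  | N_need : forall N' N, is_N N' -> is_N N ->
      is_N (CESR (plug_bound_var N') N).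

Definition redex_dB (r : term) : Prop :=
  exists L t u, is_L L /\ r = App (plug L (Lam t)) u.

Definition redex_dBv (r : term) : Prop :=
  exists L t L' v, is_L L /\ is_L L' /\ is_value v /\
    r = App (plug L (Lam t)) (plug L' v).

Definition redex_ls (P : ctx -> Prop) (r : term) : Prop :=
  exists C u, P C /\ r = ES (plug_bound_var C) u.

Definition redex_lsv (P : ctx -> Prop) (r : term) : Prop :=
  exists C L v, P C /\ is_L L /\ is_value v /\
    r = ES (plug_bound_var C) (plug L v).

Inductive calculus : Type := Name | ValueLR | ValueRL | Need.

Definition evctx (c : calculus) : ctx -> Prop :=
  match c with
  | Name => is_H
  | ValueLR => is_V
  | ValueRL => is_S
  | Need => is_N
  end.

Definition redex (c : calculus) (r : term) : Prop :=
  match c with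
  | Name => redex_dB r \/ redex_ls is_H r
  | ValueLR => redex_dBv r \/ redex_lsv is_V r
  | ValueRL => redex_dBv r \/ redex_lsv is_S r
  | Need => redex_dB r \/ redex_lsv is_N r
  end.

(* Main.v *)
Require Import Defs.
From Stdlib Require Import Lia.

Lemma plug_inj : forall E t1 t2, plug E t1 = plug E t2 -> t1 = t2.
Proof. induction E; simpl; intros t1 t2 H; try injection H; auto. Qed.

Ltac inj := repeat match goal with
  | H : Var _ = Var _ |- _ => injection H; clear H; intros
  | H : App _ _ = App _ _ |- _ => injection H; clear H; intros
  | H : ES _ _ = ES _ _ |- _ => injection H; clear H; intros
  | H : Lam _ = Lam _ |- _ => injection H; clear H; intros
  end.

Lemma N_var_uniq : forall N1, is_N N1 -> forall N2 k1 k2, is_N N2 ->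
  plug N1 (Var k1) = plug N2 (Var k2) -> depth N1 <= k1 -> depth N2 <= k2 ->
  N1 = N2 /\ k1 = k2.
Proof.
  induction 1; intros N2 k1 k2 HN2 Heq d1 d2; inversion HN2; subst;
    unfold plug_bound_var in *; simpl in *; try discriminate; inj; subst.
  all: try (simpl; auto; fail).
  all: match goal with
   | IH : forall N2 k1 k2, is_N N2 -> plug ?A (Var _) = plug N2 (Var _) -> _,
     Hn : is_N ?B, He : plug ?A (Var _) = plug ?B (Var _) |- _ =>
       destruct (IH _ _ _ Hn He ltac:(simpl in *; lia) ltac:(simpl in *; lia)); subst
   end; try lia; auto.
  destruct (IHis_N2 _ _ _ H2 H3 d1 d2); subst; auto.
Qed.

Lemma N_C : forall N, is_N N -> forall L t k, is_L L -> plug L (Lam t) <> plug N (Var k).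
Proof.
  induction 1; intros L t0 k HL Heq; inversion HL; subst; simpl in *; try discriminate; inj; subst.
  - eapply IHis_N; eauto.
  - eapply IHis_N1; eauto.
Qed.

Lemma N_E : forall N, is_N N -> forall L t r, is_L L -> redex Need r -> plug L (Lam t) <> plug N r.
Proof.
  induction 1; intros L t0 r HL Hr Heq;
  destruct Hr as [(L1&t1&u&HL1&->)|(C&L1&v&HC&HL1&[b ->]&->)];
  inversion HL; subst; unfold plug_bound_var in *; simpl in *; try discriminate; inj; subst.
  all: try (match goal with H : plug ?L (Lam _) = plug ?N (Var _) |- _ =>
             eapply (N_C N); [eassumption|eassumption|exact H] end).
  all: match goal with IH : forall L t r, _ |- _ =>
    eapply IH; [eassumption| |eassumption]; unfold redex_dB, redex_lsv, plug_bound_var, is_value; eauto 10 end.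
Qed.

Ltac useC := match goal with H : plug ?L (Lam _) = plug ?N (Var _) |- _ =>
             eapply (N_C N); [eassumption|eassumption|exact H]
  | H : plug ?N (Var _) = plug ?L (Lam _) |- _ =>
             eapply (N_C N); [eassumption|eassumption|symmetry; exact H] end.

Ltac useA := match goal with H : plug ?N1 (Var ?k1) = plug ?N2 (Var ?k2),
   H1 : is_N ?N1, H2 : is_N ?N2 |- _ =>
   let a := fresh in let b := fresh in
   destruct (N_var_uniq _ H1 _ _ _ H2 H ltac:(simpl in *; lia) ltac:(simpl in *; lia)) as [a b];
   subst; simpl in *; lia end.

Lemma N_B : forall N1, is_N N1 -> forall N2 r k, is_N N2 -> redex Need r ->
  depth N2 <= k -> plug N1 r <> plug N2 (Var k).
Proof.
  induction 1; intros N2 r k HN2 Hr dk Heq.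
  { simpl in Heq; subst r.
    destruct Hr as [(L1&t1&u&HL1&Hr)|(C&L1&v&HC&HL1&[b ->]&Hr)];
    inversion HN2; subst; unfold plug_bound_var in *; simpl in *; try discriminate; inj; subst;
    try useC; useA. }
  all: inversion HN2; subst;
  unfold plug_bound_var in *; simpl in *; try discriminate; inj; subst.
  all: try useA.
  all: match goal with IH : forall N2 r k, _ -> _ -> _ -> plug ?A r <> plug N2 (Var k),
     He : plug ?A ?r = plug ?B (Var ?k) |- _ => eapply IH; [ |eassumption| |exact He]; try eassumption; simpl in *; lia end.
Qed.

Ltac useE := match goal with
  | H : plug ?L (Lam _) = plug ?N ?r |- _ => eapply (N_E N); [eassumption|eassumption|eassumption|exact H]
  | H : plug ?N ?r = plug ?L (Lam _) |- _ => eapply (N_E N); [eassumption|eassumption|eassumption|symmetry; exact H]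
  end.

Lemma N_D : forall N r1 r2, is_N N -> N <> Hole -> redex Need r1 -> redex Need r2 ->
  r1 = plug N r2 -> False.
Proof.
  intros N r1 r2 HN Hne Hr1 Hr2 Heq.
  destruct Hr1 as [(L1&t1&u&HL1&->)|(C&L1&v&HC&HL1&[b ->]&->)];
  inversion HN; subst; unfold plug_bound_var in *; simpl in *; try congruence; inj; subst;
  try useE.
  exact (N_B N0 H C r2 (depth C) HC Hr2 (le_n _) (eq_sym H1)).
Qed.

Lemma N_main : forall E1, is_N E1 -> forall E2 r1 r2, is_N E2 -> redex Need r1 -> redex Need r2 ->
  plug E1 r1 = plug E2 r2 -> E1 = E2.
Proof.
  intros E1 HE1; pose proof HE1 as HE1'; induction HE1; intros E2 r1 r2 HE2 Hr1 Hr2 Heq.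
  { simpl in Heq; destruct E2; [reflexivity|..]; exfalso; (apply (N_D _ r1 r2 HE2); [discriminate|assumption|assumption|exact Heq]). }
  all: (destruct E2; [exfalso; simpl in Heq; (apply (N_D _ r2 r1 HE1'); [discriminate|assumption|assumption|symmetry; exact Heq]) | ..]).
  all: inversion HE2; subst; unfold plug_bound_var in *; simpl in *; try discriminate; inj; subst.
  all: try (exfalso; eapply N_D; [ | | exact Hr2 | exact Hr1 | symmetry; eassumption]; eauto; discriminate).
  all: try (exfalso; eapply N_B; [ | | exact Hr1 | | eassumption]; eauto; fail).
  all: try (exfalso; eapply N_B; [ | | exact Hr2 | | symmetry; eassumption]; eauto; fail).
  all: try (f_equal; eauto; fail).
Qed.

Lemma H_N : forall H, is_H H -> is_N H.
Proof. induction 1; constructor; auto. Qed.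

Lemma H_var_uniq : forall N1 N2 k1 k2, is_H N1 -> is_H N2 ->
  plug N1 (Var k1) = plug N2 (Var k2) -> depth N1 <= k1 -> depth N2 <= k2 ->
  N1 = N2 /\ k1 = k2.
Proof. intros; eapply N_var_uniq; eauto using H_N. Qed.

Lemma H_C : forall N L t k, is_H N -> is_L L -> plug L (Lam t) <> plug N (Var k).
Proof. intros; eapply N_C; eauto using H_N. Qed.

Ltac useCH := match goal with
  | H : plug ?L (Lam _) = plug ?N (Var _) |- _ =>
             eapply (H_C N); [eassumption|eassumption|exact H]
  | H : plug ?N (Var _) = plug ?L (Lam _) |- _ =>
             eapply (H_C N); [eassumption|eassumption|symmetry; exact H] end.

Ltac useAH := match goal with H : plug ?N1 (Var ?k1) = plug ?N2 (Var ?k2),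
   H1 : is_H ?N1, H2 : is_H ?N2 |- _ =>
   let a := fresh in let b := fresh in
   destruct (H_var_uniq _ _ _ _ H1 H2 H ltac:(simpl in *; lia) ltac:(simpl in *; lia)) as [a b];
   subst; simpl in *; lia end.

Lemma H_E : forall N, is_H N -> forall L t r, is_L L -> redex Name r -> plug L (Lam t) <> plug N r.
Proof.
  induction 1; intros L t0 r HL Hr Heq;
  destruct Hr as [(L1&t1&u&HL1&->)|(C&u&HC&->)];
  inversion HL; subst; unfold plug_bound_var in *; simpl in *; try discriminate; inj; subst.
  all: try useCH.
  all: match goal with IH : forall L t r, _ |- _ =>
    eapply IH; [eassumption| |eassumption]; unfold redex_dB, redex_ls, plug_bound_var, is_value; eauto 10 end.
Qed.

Lemma H_B : forall N1, is_H N1 -> forall N2 r k, is_H N2 -> redex Name r ->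
  depth N2 <= k -> plug N1 r <> plug N2 (Var k).
Proof.
  induction 1; intros N2 r k HN2 Hr dk Heq.
  { simpl in Heq; subst r.
    destruct Hr as [(L1&t1&u&HL1&Hr)|(C&u&HC&Hr)];
    inversion HN2; subst; unfold plug_bound_var in *; simpl in *; try discriminate; inj; subst;
    try useCH; useAH. }
  all: inversion HN2; subst;
  unfold plug_bound_var in *; simpl in *; try discriminate; inj; subst.
  all: try useAH.
  all: match goal with IH : forall N2 r k, _ -> _ -> _ -> plug ?A r <> plug N2 (Var k),
     He : plug ?A ?r = plug ?B (Var ?k) |- _ => eapply IH; [ |eassumption| |exact He]; try eassumption; simpl in *; lia end.
Qed.

Lemma H_D : forall N r1 r2, is_H N -> N <> Hole -> redex Name r1 -> redex Name r2 ->
  r1 = plug N r2 -> False.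
Proof.
  intros N r1 r2 HN Hne Hr1 Hr2 Heq.
  destruct Hr1 as [(L1&t1&u&HL1&->)|(C&u&HC&->)];
  inversion HN; subst; unfold plug_bound_var in *; simpl in *; try congruence; inj; subst.
  - match goal with H : plug ?L (Lam _) = plug ?N ?r |- _ => eapply (H_E N); [eassumption|eassumption|eassumption|exact H] end.
  - exact (H_B H H0 C r2 (depth C) HC Hr2 (le_n _) (eq_sym H2)).
Qed.

Lemma H_main : forall E1, is_H E1 -> forall E2 r1 r2, is_H E2 -> redex Name r1 -> redex Name r2 ->
  plug E1 r1 = plug E2 r2 -> E1 = E2.
Proof.
  intros E1 HE1; pose proof HE1 as HE1'; induction HE1; intros E2 r1 r2 HE2 Hr1 Hr2 Heq.
  { simpl in Heq; destruct E2; [reflexivity|..]; exfalso; (apply (H_D _ r1 r2 HE2); [discriminate|assumption|assumption|exact Heq]). }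
  all: (destruct E2; [exfalso; simpl in Heq; (apply (H_D _ r2 r1 HE1'); [discriminate|assumption|assumption|symmetry; exact Heq]) | ..]).
  all: inversion HE2; subst; unfold plug_bound_var in *; simpl in *; try discriminate; inj; subst.
  all: f_equal; eauto.
Qed.

Lemma V_C : forall V, is_V V -> forall L t k, is_L L -> plug L (Lam t) <> plug V (Var k).
Proof.
  induction 1; intros LL t0 k HL Heq; inversion HL; subst; simpl in *; try discriminate; inj; subst.
  eapply IHis_V; eauto.
Qed.

Ltac useCV := match goal with
  | H : plug ?L (Lam _) = plug ?N (Var _) |- _ =>
             eapply (V_C N ltac:(eassumption) L); [eassumption|exact H]
  | H : plug ?N (Var _) = plug ?L (Lam _) |- _ =>
             eapply (V_C N ltac:(eassumption) L); [eassumption|symmetry; exact H] end.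

Lemma V_var_uniq : forall N1, is_V N1 -> forall N2 k1 k2, is_V N2 ->
  plug N1 (Var k1) = plug N2 (Var k2) -> depth N1 <= k1 -> depth N2 <= k2 ->
  N1 = N2 /\ k1 = k2.
Proof.
  induction 1; intros N2 k1 k2 HN2 Heq d1 d2; inversion HN2; subst;
    unfold plug_bound_var in *; simpl in *; try discriminate; inj; subst;
    repeat match goal with H : is_value _ |- _ => destruct H as [? ->] end;
    simpl in *; inj; subst; try (exfalso; useCV).
  all: try (simpl; auto; fail).
  all: match goal with
   | IH : forall N2 k1 k2, is_V N2 -> plug ?A (Var _) = plug N2 (Var _) -> _,
     Hn : is_V ?B, He : plug ?A (Var _) = plug ?B (Var _) |- _ =>
       destruct (IH _ _ _ Hn He ltac:(simpl in *; lia) ltac:(simpl in *; lia)); subst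
   end; try lia; auto.
  all: split; congruence.
Qed.

Ltac useAV := match goal with H : plug ?N1 (Var ?k1) = plug ?N2 (Var ?k2),
   H1 : is_V ?N1, H2 : is_V ?N2 |- _ =>
   let a := fresh in let b := fresh in
   destruct (V_var_uniq _ H1 _ _ _ H2 H ltac:(simpl in *; lia) ltac:(simpl in *; lia)) as [a b];
   subst; simpl in *; lia end.

Lemma V_E : forall N, is_V N -> forall L t r, is_L L -> redex ValueLR r -> plug L (Lam t) <> plug N r.
Proof.
  induction 1; intros LL t0 r HL Hr Heq;
  destruct Hr as [(L1&t1&L2&vv&HL1&HL2&[b ->]&->)|(C&L1&vv&HC&HL1&[b ->]&->)];
  inversion HL; subst; unfold plug_bound_var in *; simpl in *; try discriminate; inj; subst.
  all: try useCV.
  all: match goal with IH : forall L t r, _ |- _ =>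
    eapply IH; [eassumption| |eassumption]; unfold redex_dBv, redex_lsv, plug_bound_var, is_value; eauto 12 end.
Qed.

Ltac useEV := match goal with
  | H : plug ?L (Lam _) = plug ?N ?r |- _ => eapply (V_E N ltac:(eassumption) L _ r); [eassumption|eassumption|exact H]
  | H : plug ?N ?r = plug ?L (Lam _) |- _ => eapply (V_E N ltac:(eassumption) L _ r); [eassumption|eassumption|symmetry; exact H]
  end.

Lemma V_B : forall N1, is_V N1 -> forall N2 r k, is_V N2 -> redex ValueLR r ->
  depth N2 <= k -> plug N1 r <> plug N2 (Var k).
Proof.
  induction 1; intros N2 r k HN2 Hr dk Heq.
  { simpl in Heq; subst r.
    destruct Hr as [(L1&t1&L2&vv&HL1&HL2&[b ->]&Hr)|(C&L1&vv&HC&HL1&[b ->]&Hr)];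
    inversion HN2; subst; unfold plug_bound_var in *; simpl in *; try discriminate; inj; subst;
    repeat match goal with H : is_value _ |- _ => destruct H as [? ->] end;
    try useCV; useAV. }
  all: inversion HN2; subst;
  unfold plug_bound_var in *; simpl in *; try discriminate; inj; subst;
  repeat match goal with H : is_value _ |- _ => destruct H as [? ->] end.
  all: try useAV.
  all: try useCV.
  all: try useEV.
  all: match goal with IH : forall N2 r k, _ -> _ -> _ -> plug ?A r <> plug N2 (Var k),
     He : plug ?A ?r = plug ?B (Var ?k) |- _ => eapply IH; [ |eassumption| |exact He]; try eassumption; simpl in *; lia end.
Qed.

Lemma V_D : forall N r1 r2, is_V N -> N <> Hole -> redex ValueLR r1 -> redex ValueLR r2 ->
  r1 = plug N r2 -> False.
Proof.
  intros N r1 r2 HN Hne Hr1 Hr2 Heq.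
  destruct Hr1 as [(L1&t1&L2&vv&HL1&HL2&[b ->]&->)|(C&L1&vv&HC&HL1&[b ->]&->)];
  inversion HN; subst; unfold plug_bound_var in *; simpl in *; try congruence; inj; subst;
  repeat match goal with H : is_value _ |- _ => destruct H as [? ->] end;
  try useEV.
  all: match goal with H : plug ?C (Var (depth ?C)) = plug ?N ?r, HC : is_V ?C, HN : is_V ?N |- _ =>
    exact (V_B N HN C r (depth C) HC Hr2 (le_n _) (eq_sym H)) end.
Qed.

Lemma V_main : forall E1, is_V E1 -> forall E2 r1 r2, is_V E2 -> redex ValueLR r1 -> redex ValueLR r2 ->
  plug E1 r1 = plug E2 r2 -> E1 = E2.
Proof.
  intros E1 HE1; pose proof HE1 as HE1'; induction HE1; intros E2 r1 r2 HE2 Hr1 Hr2 Heq.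
  { simpl in Heq; destruct E2; [reflexivity|..]; exfalso; (apply (V_D _ r1 r2 HE2); [discriminate|assumption|assumption|exact Heq]). }
  all: (destruct E2; [exfalso; simpl in Heq; (apply (V_D _ r2 r1 HE1'); [discriminate|assumption|assumption|symmetry; exact Heq]) | ..]).
  all: inversion HE2; subst; unfold plug_bound_var in *; simpl in *; try discriminate; inj; subst;
  repeat match goal with H : is_value _ |- _ => destruct H as [? ->] end.
  all: try (exfalso; useEV).
  all: f_equal; eauto.
Qed.

Lemma S_C : forall V, is_S V -> forall L t k, is_L L -> plug L (Lam t) <> plug V (Var k).
Proof.
  induction 1; intros LL t0 k HL Heq; inversion HL; subst; simpl in *; try discriminate; inj; subst.
  eapply IHis_S; eauto.
Qed.

Ltac useCS := match goal with
  | H : plug ?L (Lam _) = plug ?N (Var _) |- _ =>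
             eapply (S_C N ltac:(eassumption) L); [eassumption|exact H]
  | H : plug ?N (Var _) = plug ?L (Lam _) |- _ =>
             eapply (S_C N ltac:(eassumption) L); [eassumption|symmetry; exact H] end.

Lemma S_var_uniq : forall N1, is_S N1 -> forall N2 k1 k2, is_S N2 ->
  plug N1 (Var k1) = plug N2 (Var k2) -> depth N1 <= k1 -> depth N2 <= k2 ->
  N1 = N2 /\ k1 = k2.
Proof.
  induction 1; intros N2 k1 k2 HN2 Heq d1 d2; inversion HN2; subst;
    unfold plug_bound_var in *; simpl in *; try discriminate; inj; subst;
    repeat match goal with H : is_value _ |- _ => destruct H as [? ->] end;
    simpl in *; inj; subst; try (exfalso; useCS).
  all: try (simpl; auto; fail).
  all: match goal with
   | IH : forall N2 k1 k2, is_S N2 -> plug ?A (Var _) = plug N2 (Var _) -> _,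
     Hn : is_S ?B, He : plug ?A (Var _) = plug ?B (Var _) |- _ =>
       destruct (IH _ _ _ Hn He ltac:(simpl in *; lia) ltac:(simpl in *; lia)); subst
   end; try lia; auto.
  all: split; congruence.
Qed.

Ltac useAS := match goal with H : plug ?N1 (Var ?k1) = plug ?N2 (Var ?k2),
   H1 : is_S ?N1, H2 : is_S ?N2 |- _ =>
   let a := fresh in let b := fresh in
   destruct (S_var_uniq _ H1 _ _ _ H2 H ltac:(simpl in *; lia) ltac:(simpl in *; lia)) as [a b];
   subst; simpl in *; lia end.

Lemma S_E : forall N, is_S N -> forall L t r, is_L L -> redex ValueRL r -> plug L (Lam t) <> plug N r.
Proof.
  induction 1; intros LL t0 r HL Hr Heq;
  destruct Hr as [(L1&t1&L2&vv&HL1&HL2&[b ->]&->)|(C&L1&vv&HC&HL1&[b ->]&->)];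
  inversion HL; subst; unfold plug_bound_var in *; simpl in *; try discriminate; inj; subst.
  all: try useCS.
  all: match goal with IH : forall L t r, _ |- _ =>
    eapply IH; [eassumption| |eassumption]; unfold redex_dBv, redex_lsv, plug_bound_var, is_value; eauto 12 end.
Qed.

Ltac useES := match goal with
  | H : plug ?L (Lam _) = plug ?N ?r |- _ => eapply (S_E N ltac:(eassumption) L _ r); [eassumption|eassumption|exact H]
  | H : plug ?N ?r = plug ?L (Lam _) |- _ => eapply (S_E N ltac:(eassumption) L _ r); [eassumption|eassumption|symmetry; exact H]
  end.

Lemma S_B : forall N1, is_S N1 -> forall N2 r k, is_S N2 -> redex ValueRL r ->
  depth N2 <= k -> plug N1 r <> plug N2 (Var k).
Proof.
  induction 1; intros N2 r k HN2 Hr dk Heq.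
  { simpl in Heq; subst r.
    destruct Hr as [(L1&t1&L2&vv&HL1&HL2&[b ->]&Hr)|(C&L1&vv&HC&HL1&[b ->]&Hr)];
    inversion HN2; subst; unfold plug_bound_var in *; simpl in *; try discriminate; inj; subst;
    repeat match goal with H : is_value _ |- _ => destruct H as [? ->] end;
    try useCS; useAS. }
  all: inversion HN2; subst;
  unfold plug_bound_var in *; simpl in *; try discriminate; inj; subst;
  repeat match goal with H : is_value _ |- _ => destruct H as [? ->] end.
  all: try useAS.
  all: try useCS.
  all: try useES.
  all: match goal with IH : forall N2 r k, _ -> _ -> _ -> plug ?A r <> plug N2 (Var k),
     He : plug ?A ?r = plug ?B (Var ?k) |- _ => eapply IH; [ |eassumption| |exact He]; try eassumption; simpl in *; lia end.
Qed.

Lemma S_D : forall N r1 r2, is_S N -> N <> Hole -> redex ValueRL r1 -> redex ValueRL r2 ->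
  r1 = plug N r2 -> False.
Proof.
  intros N r1 r2 HN Hne Hr1 Hr2 Heq.
  destruct Hr1 as [(L1&t1&L2&vv&HL1&HL2&[b ->]&->)|(C&L1&vv&HC&HL1&[b ->]&->)];
  inversion HN; subst; unfold plug_bound_var in *; simpl in *; try congruence; inj; subst;
  repeat match goal with H : is_value _ |- _ => destruct H as [? ->] end;
  try useES.
  all: match goal with H : plug ?C (Var (depth ?C)) = plug ?N ?r, HC : is_S ?C, HN : is_S ?N |- _ =>
    exact (S_B N HN C r (depth C) HC Hr2 (le_n _) (eq_sym H)) end.
Qed.

Lemma S_main : forall E1, is_S E1 -> forall E2 r1 r2, is_S E2 -> redex ValueRL r1 -> redex ValueRL r2 ->
  plug E1 r1 = plug E2 r2 -> E1 = E2.
Proof.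
  intros E1 HE1; pose proof HE1 as HE1'; induction HE1; intros E2 r1 r2 HE2 Hr1 Hr2 Heq.
  { simpl in Heq; destruct E2; [reflexivity|..]; exfalso; (apply (S_D _ r1 r2 HE2); [discriminate|assumption|assumption|exact Heq]). }
  all: (destruct E2; [exfalso; simpl in Heq; (apply (S_D _ r2 r1 HE1'); [discriminate|assumption|assumption|symmetry; exact Heq]) | ..]).
  all: inversion HE2; subst; unfold plug_bound_var in *; simpl in *; try discriminate; inj; subst;
  repeat match goal with H : is_value _ |- _ => destruct H as [? ->] end.
  all: try (exfalso; useES).
  all: f_equal; eauto.
Qed.

Theorem mainTheorem1 :
  forall (c : calculus) (E1 E2 : ctx) (r1 r2 : term),
    evctx c E1 -> evctx c E2 -> redex c r1 -> redex c r2 ->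
    plug E1 r1 = plug E2 r2 -> E1 = E2 /\ r1 = r2.
Proof.
  intros c E1 E2 r1 r2 H1 H2 R1 R2 Heq.
  assert (E1 = E2) as <-.
  { destruct c; simpl in *.
    - exact (H_main E1 H1 E2 r1 r2 H2 R1 R2 Heq).
    - exact (V_main E1 H1 E2 r1 r2 H2 R1 R2 Heq).
    - exact (S_main E1 H1 E2 r1 r2 H2 R1 R2 Heq).
    - exact (N_main E1 H1 E2 r1 r2 H2 R1 R2 Heq). }
  split; auto. eapply plug_inj; eauto.
Qed.
Print Assumptions mainTheorem1.
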